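(* Let $n\ge3$ be odd and $n-1<s\le n$. Then $$\max\{\operatorname{per}(I-A): A\in\tilde\omega_n^s\}=2^{(n-1)/2}.$$ The maximum is attained by $M_2\oplus\cdots\oplus M_2\oplus M_3$ with $(n-3)/2$ copies of $M_2=\begin{pmatrix}0&1\\1&0\end{pmatrix}$ and $M_3=\begin{pmatrix}0&1&0\\1&0&0\\0&s-(n-1)&0\end{pmatrix}$.
   Context: An $n\times n$ matrix is row substochastic if all entries are nonnegative and each row sum is at most $1$. $\sigma(A)$ is the sum of all entries of $A$, and $\tilde\omega_n^s$ is the set of $n\times n$ row substochastic matrices $A$ with $\sigma(A)=s$. $\oplus$ is block-diagonal direct sum. The permanent is $\operatorname{per}(M)=\sum_{\pi\in S_n}\prod_i m_{i\pi(i)}$, and $I$ is the identity matrix. *)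

(* Defs.v *)
From HB Require Import structures.
From mathcomp Require Import all_boot all_order all_algebra all_fingroup.
Set Implicit Arguments. Unset Strict Implicit. Unset Printing Implicit Defensive.
Import Order.TTheory GRing.Theory Num.Theory.
Local Open Scope ring_scope.

Definition per (R : comRingType) (n : nat) (M : 'M[R]_n) : R :=
  \sum_(p : 'S_n) \prod_(i < n) M i (p i).

Definition sigma (R : ringType) (n : nat) (A : 'M[R]_n) : R :=
  \sum_(i < n) \sum_(j < n) A i j.

Definition row_substochastic (R : numDomainType) (n : nat) (A : 'M[R]_n) : Prop :=
  (forall i j, 0 <= A i j) /\ (forall i, \sum_(j < n) A i j <= 1).

Definition in_omega_tilde (R : numDomainType) (n : nat) (s : R) (A : 'M[R]_n) : Prop :=
  row_substochastic A /\ sigma A = s.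

(* M_2 (+) ... (+) M_2 (+) M_3, written entrywise (n odd):
   indices 0..n-2 are grouped in pairs {2t,2t+1} carrying the M_2 blocks
   (the last pair {n-3,n-2} is the top-left M_2 inside M_3), and the last row
   of M_3 has the entry s-(n-1) at column n-2. *)
Definition extremal_mx (R : ringType) (n : nat) (s : R) : 'M[R]_n :=
  \matrix_(i < n, j < n)
    if [&& (i < n.-1)%N, (j < n.-1)%N, (i./2 == j./2)%N & (i != j :> nat)]
    then 1
    else if ((i == n.-1 :> nat) && (j == n.-2 :> nat)) then s - (n.-1)%:R else 0.

(* Main.v *)
Require Import Defs.
From HB Require Import structures.
From mathcomp Require Import all_boot all_order all_algebra all_fingroup.
From mathcomp Require Import zify.
Set Implicit Arguments. Unset Strict Implicit. Unset Printing Implicit Defensive.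
Import Order.TTheory GRing.Theory Num.Theory.
Local Open Scope ring_scope.

Section Good.
Variables (T : finType) (f : T -> T).

Definition good (S : {set T}) := f @: S == S.
Definition GF (U : {set T}) := [set S : {set T} | (S \subset U) && good S].
Definition sumG (R : pzRingType) (U : {set T}) : R := \sum_(S in GF U) (-1) ^+ #|S|.

Lemma good_mem {S x} : good S -> x \in S -> f x \in S.
Proof. by move=> /eqP HS xS; rewrite -HS; apply: imset_f. Qed.

Lemma good_inj {S} : good S -> {in S &, injective f}.
Proof. by move=> /eqP HS; apply/imset_injP; rewrite HS. Qed.

Lemma good0 : good set0.
Proof. by rewrite /good imset0. Qed.

Lemma goodU S A : good S -> good A -> good (S :|: A).
Proof. by rewrite /good imsetU => /eqP -> /eqP ->. Qed.

Lemma goodI S A : good S -> good A -> good (S :&: A).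
Proof.
move=> gS gA; rewrite /good eqEcard; apply/andP; split.
  apply/subsetP=> y /imsetP [x]; rewrite inE => /andP [xS xA] ->.
  by rewrite inE (good_mem gS xS) (good_mem gA xA).
rewrite card_in_imset //; apply: sub_in2 (good_inj gS).
by move=> x; rewrite inE => /andP [].
Qed.

Lemma goodD S A : good S -> good A -> A \subset S -> good (S :\: A).
Proof.
move=> gS gA AS; rewrite /good eqEcard; apply/andP; split.
  apply/subsetP=> y /imsetP [x]; rewrite inE => /andP [xA xS] ->.
  rewrite inE (good_mem gS xS) andbT; apply/negP=> fxA.
  move: fxA; rewrite -(eqP gA) => /imsetP [z zA ezx].
  have := good_inj gS xS (subsetP AS _ zA) ezx => exz.
  by rewrite exz zA in xA.
rewrite card_in_imset //; apply: sub_in2 (good_inj gS).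
by move=> x; rewrite inE => /andP [].
Qed.

Lemma sumG_split (R : comPzRingType) (U A : {set T}) : A \subset U -> good A -> A != set0 ->
  (forall S, S \in GF U -> (S :&: A == set0) || (A \subset S)) ->
  sumG R U = (1 + (-1) ^+ #|A|) * sumG R (U :\: A).
Proof.
move=> AU gA A0 atom; rewrite /sumG (bigID (fun S : {set T} => A \subset S)) /=.
have [a aA] := set0Pn _ A0.
have -> : \sum_(S in GF U | ~~ (A \subset S)) (-1) ^+ #|S| =
          \sum_(S in GF (U :\: A)) ((-1) ^+ #|S| : R).
  apply: eq_bigl => S; rewrite !inE; apply/idP/idP.
    move=> /andP [/andP [SU gS] nAS].
    have := atom S; rewrite inE SU gS => /(_ isT); rewrite (negbTE nAS) orbF.
    move=> /eqP SA0; rewrite andbT; apply/subsetP=> x xS.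
    rewrite inE (subsetP SU _ xS) andbT; apply/negP=> xA.
    have H : x \in S :&: A by rewrite inE xS xA.
    by rewrite SA0 inE in H.
  move=> /andP [SUA gS]; rewrite gS andbT; apply/andP; split.
    by apply: subset_trans SUA (subsetDl _ _).
  apply/negP=> AS; have := subsetP SUA _ (subsetP AS _ aA).
  by rewrite inE aA.
rewrite (reindex_onto (fun S => S :|: A) (fun S => S :\: A)); last first.
  move=> S /andP [_ AS]; apply/setP=> x; rewrite !inE.
  by case xA: (x \in A) => //=; rewrite ?orbT ?orbF ?(subsetP AS _ xA).
have disj S : S \in GF (U :\: A) -> S :&: A = set0.
  rewrite inE => /andP [SUA _]; apply/setP=> x; rewrite !inE.
  apply/negP=> /andP [xS xA]; have := subsetP SUA _ xS; by rewrite inE xA.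
rewrite (eq_bigl (fun S => S \in GF (U :\: A))); last first.
  move=> S; apply/idP/idP.
    move=> /andP [/andP [SU AS] /eqP eS]; rewrite -eS.
    move: SU; rewrite inE => /andP [SAU gSA].
    rewrite inE goodD // ?subsetUr // andbT.
    by apply: setSD.
  move=> HS; have := disj S HS; move: HS; rewrite inE => /andP [SUA gS] SA0.
  have eSA : (S :|: A) :\: A = S.
    apply/setP=> x; rewrite !inE; case xA: (x \in A); rewrite /= ?orbF ?orbT ?andbT //.
    apply/esym/negP=> xS; have H : x \in S :&: A by rewrite inE xS xA.
    by rewrite SA0 inE in H.
  rewrite eSA eqxx andbT subsetUr andbT inE goodU // andbT subUset AU andbT.
  by apply: subset_trans SUA (subsetDl _ _).
have -> : \sum_(S in GF (U :\: A)) ((-1) ^+ #|S :|: A| : R) =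
          \sum_(S in GF (U :\: A)) ((-1) ^+ #|S| * (-1) ^+ #|A|).
  apply: eq_bigr => S HS; by rewrite cardsU disj // cards0 subn0 exprD.
by rewrite -mulr_suml mulrDl mul1r addrC mulrC.
Qed.

Lemma sumG_bound (R : numDomainType) m (U : {set T}) : (#|U| <= m)%N ->
  (forall x, x \in U -> f x != x) -> sumG R U <= 2 ^+ (#|U|./2).
Proof.
elim: m U => [|m IH] U.
  rewrite leqn0 => /eqP /cards0_eq -> _.
  rewrite /sumG (big_pred1 set0); first by rewrite cards0 expr0 expr0.
  move=> S; rewrite !inE subset0; case: (S =P set0) => [->|_]; by rewrite ?good0.
move=> Um Ufix.
case: (boolP [exists S, (S \in GF U) && (S != set0)]); last first.
  rewrite negb_exists => /forallP H.
  rewrite /sumG (big_pred1 set0); first by rewrite cards0 expr0 exprn_ege1 // ler1n.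
  move=> S; have := H S; rewrite negb_and negbK /=.
  case: (S =P set0) => [-> _|/eqP/negbTE ne]; rewrite ?eqxx ?ne ?orbF; last by move/negbTE.
  by rewrite inE sub0set good0.
move=> /existsP [S0 HS0].
case: (@arg_minnP _ S0 (fun S : {set T} => (S \in GF U) && (S != set0)) (fun S : {set T} => #|S|) HS0) => A /andP [AG A0] Amin.
have [AU gA] : A \subset U /\ good A by move: AG; rewrite inE => /andP [].
have atom S : S \in GF U -> (S :&: A == set0) || (A \subset S).
  move=> SG; case: eqP => //= SA0.
  have SAG : (S :&: A \in GF U) && (S :&: A != set0).
    move: SG; rewrite !inE => /andP [SU gS]; rewrite goodI // andbT.
    by rewrite (subset_trans (subsetIl _ _) SU); apply/eqP.
  have := Amin _ SAG => cardA.
  have : S :&: A == A by rewrite eqEcard subsetIr cardA.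
  by move=> /eqP <-; rewrite subsetIl.
rewrite (@sumG_split R U A AU gA A0 atom).
have [a aA] := set0Pn _ A0.
have A2 : (2 <= #|A|)%N.
  rewrite ltnNge; apply/negP=> /card_le1_eqP H.
  have := H _ _ (good_mem gA aA) aA => e.
  by move: (Ufix a (subsetP AU _ aA)); rewrite -e eqxx.
have cardUA : #|U :\: A| = (#|U| - #|A|)%N.
  by rewrite cardsD (setIidPr AU).
have IH' := IH (U :\: A).
have Hle : (#|U :\: A| <= m)%N by rewrite cardUA; move: Um A2 (subset_leq_card AU); lia.
have Hfix : forall x, x \in U :\: A -> f x != x.
  by move=> x; rewrite inE => /andP [_ /Ufix].
have := IH' Hle Hfix => bnd.
rewrite -signr_odd; case: (odd #|A|); first by rewrite expr1 subrr mul0r exprn_ge0.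
rewrite expr0 -[1 + 1]/(2%:R).
apply: le_trans (_ : 2%:R * 2 ^+ (#|U :\: A|)./2 <= _).
  by apply: ler_wpM2l.
rewrite -exprS; apply: ler_weXn2l; first by rewrite ler1n.
rewrite cardUA -[((#|U| - #|A|)./2).+1]/((#|U| - #|A|).+2./2).
apply: half_leq; move: A2 (subset_leq_card AU); lia.
Qed.

End Good.

Definition vmx (R : numDomainType) n (D : {set 'I_n}) (f : 'I_n -> 'I_n) : 'M[R]_n :=
  \matrix_(i, l) ((l == i)%:R - (i \in D)%:R * (l == f i)%:R).

Definition moved n (p : 'S_n) := [set i | p i != i].
Definition valid n (D : {set 'I_n}) (f : 'I_n -> 'I_n) (p : 'S_n) :=
  [forall i, (p i == i) || ((i \in D) && (p i == f i))].

Lemma per_vmx (R : numDomainType) n (D : {set 'I_n}) f :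
  (forall i, i \in D -> f i != i) -> per (vmx R D f) = sumG f R D.
Proof.
move=> Dfix.
have step1 : per (vmx R D f) =
   \sum_(p : 'S_n) (if valid D f p then (-1) ^+ #|moved p| else 0).
  apply: eq_bigr => p _; case: (boolP (valid D f p)).
    move=> /forallP V.
    rewrite (eq_bigr (fun i => if p i != i then -1 else 1)); last first.
      move=> i _; rewrite mxE; have := V i.
      case: (p i =P i) => [->|ne] /=.
        case iD: (i \in D); last by rewrite mul0r subr0.
        by rewrite eq_sym (negbTE (Dfix i iD)) mulr0 subr0.
      move=> /andP [-> /eqP ->]; by rewrite eqxx mul1r sub0r.
    rewrite -big_mkcond /= (eq_bigl (fun i => i \in moved p)) ?prodr_const //.
    by move=> i; rewrite inE.
  rewrite negb_forall => /existsP [i]; rewrite negb_or => /andP [h1 h2].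
  rewrite (bigD1 i) //= mxE (negbTE h1).
  case iD: (i \in D) in h2 *; rewrite /= in h2.
    by rewrite (negbTE h2) mulr0 subr0 mul0r.
  by rewrite mul0r subr0 mul0r.
rewrite step1 -big_mkcond /=.
have inj : {in [set p | valid D f p] &, injective (@moved n)}.
  move=> p q; rewrite !inE => /forallP Vp /forallP Vq eM.
  apply/permP=> x; have := Vp x; have := Vq x.
  have : (x \in moved p) = (x \in moved q) by rewrite eM.
  rewrite !inE; case: (p x =P x) => [->|_]; case: (q x =P x) => [->|_] //=.
  by move=> _ /andP [_ /eqP ->] /andP [_ /eqP ->].
have eG : GF f D = [set moved p | p in [set p | valid D f p]].
  apply/setP=> S; apply/idP/imsetP.
    rewrite inE => /andP [SD gS].
    have injS : injective (fun x => if x \in S then f x else x).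
      move=> x y /=; case xS: (x \in S); case yS: (y \in S).
      - by apply: (good_inj gS).
      - by move=> e; have := good_mem gS xS; rewrite e yS.
      - by move=> e; have := good_mem gS yS; rewrite -e xS.
      - by [].
    exists (perm injS).
      rewrite inE; apply/forallP=> x; rewrite permE.
      case xS: (x \in S); last by rewrite eqxx.
      by rewrite (subsetP SD _ xS) eqxx orbT.
    apply/setP=> x; rewrite inE permE; case xS: (x \in S); last by rewrite eqxx.
    by rewrite (Dfix x (subsetP SD _ xS)).
  move=> [p]; rewrite inE => /forallP Vp ->.
  rewrite inE; apply/andP; split.
    apply/subsetP=> x; rewrite inE => px; have := Vp x.
    by rewrite (negbTE px) => /andP [].
  have pmem : forall x, x \in moved p -> p x \in moved p.
    move=> x; rewrite !inE => px; apply/negP=> /eqP ppx.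
    by move: px; rewrite (perm_inj ppx) eqxx.
  rewrite /good; have -> : [set f x | x in moved p] = [set p x | x in moved p].
    apply: eq_in_imset => x; rewrite inE => px; have := Vp x.
    by rewrite (negbTE px) => /andP [_ /eqP ->].
  rewrite eqEcard card_imset; last exact: perm_inj.
  rewrite leqnn andbT; apply/subsetP=> y /imsetP [x xm ->]; exact: pmem.
rewrite /sumG eG big_imset //=.
by apply: eq_bigl => p; rewrite inE.
Qed.

Definition rowset (R : numDomainType) n (M : 'M[R]_n) (i : 'I_n) (v : 'I_n -> R) : 'M[R]_n :=
  \matrix_(k, l) if k == i then v l else M k l.

Lemma per_rowlin (R : numDomainType) n (M : 'M[R]_n) i (I : finType) (c : I -> R)
  (v : I -> 'I_n -> R) :
  per (rowset M i (fun l => \sum_j c j * v j l)) =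
  \sum_j c j * per (rowset M i (v j)).
Proof.
rewrite /per [RHS](eq_bigr (fun j => \sum_(p : 'S_n) c j * \prod_(k < n) rowset M i (v j) k (p k))); last first.
  by move=> j _; rewrite mulr_sumr.
rewrite exchange_big /=; apply: eq_bigr => p _; rewrite /rowset.
rewrite (bigD1 i) //= mxE eqxx mulr_suml; apply: eq_bigr => j _.
rewrite [in RHS](bigD1 i) //= mxE eqxx !mulrA; congr (_ * _).
by apply: eq_bigr => k /negbTE kn; rewrite !mxE kn.
Qed.

Definition vrow (R : numDomainType) n (d : bool) (f : 'I_n) (i l : 'I_n) : R :=
  (l == i)%:R - d%:R * (l == f)%:R.

Lemma vertex_bound (R : numDomainType) n (M : 'M[R]_n) (d : 'I_n -> bool) f :
  (forall i l, M i l = vrow R (d i) (f i) i l) -> per M <= 2 ^+ (n./2).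
Proof.
move=> HM.
case: (boolP [exists i, d i && (f i == i)]).
  move=> /existsP [i /andP [di /eqP fi]].
  have -> : per M = 0.
    rewrite /per big1 // => p _; rewrite (bigD1 i) //= HM /vrow di fi mul1r subrr.
    by rewrite mul0r.
  exact: exprn_ge0.
rewrite negb_exists => /forallP H.
have -> : M = vmx R [set i | d i] f.
  by apply/matrixP=> i l; rewrite HM !mxE inE.
rewrite per_vmx; last first.
  by move=> i; rewrite inE => di; have := H i; rewrite di.
apply: le_trans (sumG_bound R (leqnn _) _) _.
  by move=> x; rewrite inE => dx; have := H x; rewrite dx.
apply: ler_weXn2l; first by rewrite ler1n.
apply: half_leq; apply: leq_trans (max_card _) _; by rewrite card_ord.
Qed.

Definition goodrow (R : numDomainType) n (M : 'M[R]_n) (i : 'I_n) :=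
  exists a : 'I_n -> R, [/\ forall j, 0 <= a j, \sum_j a j <= 1 &
     forall l, M i l = (l == i)%:R - a l].

Lemma reduce (R : numDomainType) n k : (k <= n)%N ->
  forall (M : 'M[R]_n) (d : 'I_n -> bool) f,
  (forall i : 'I_n, (i < k)%N -> goodrow M i) ->
  (forall i : 'I_n, (k <= i)%N -> forall l, M i l = vrow R (d i) (f i) i l) ->
  per M <= 2 ^+ (n./2).
Proof.
elim: k => [|k IH] kn M d f Hg Hv.
  by apply: (@vertex_bound R n M d f) => i l; apply: Hv.
set i0 : 'I_n := Ordinal kn.
have [a [a0 a1 Ma]] := Hg i0 (leqnn _).
have eM : M = rowset M i0 (fun l => \sum_(b : bool)
    (if b then 1 - \sum_j a j else 1) *
    (if b then (l == i0)%:R else \sum_j a j * ((l == i0)%:R - (l == j)%:R))).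
  apply/matrixP=> i l; rewrite mxE; case: (i =P i0) => [->|//].
  rewrite big_bool /= mul1r Ma mulrBl mul1r.
  rewrite [X in _ = _ + X](eq_bigr (fun j => a j * (l == i0)%:R - a j * (l == j)%:R)); last first.
    by move=> j _; rewrite mulrBr.
  rewrite sumrB -mulr_suml.
  have -> : \sum_j a j * (l == j)%:R = a l.
    rewrite (bigD1 l) //= eqxx mulr1 big1 ?addr0 //.
    by move=> j /negbTE; rewrite eq_sym => ->; rewrite mulr0.
  by rewrite [X in _ = X]addrA subrK.
have IH' := IH (ltnW kn).
have sub (b : bool) (j : 'I_n) (v : 'I_n -> R) :
    (forall l, v l = vrow R b j i0 l) -> per (rowset M i0 v) <= 2 ^+ (n./2).
  move=> Hvv.
  apply: (IH' _ (fun i => if i == i0 then b else d i) (fun i => if i == i0 then j else f i)).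
    move=> i ik; have ne : i != i0.
      by apply/eqP=> e; move: ik; rewrite e /= ltnn.
    have [a' [a'0 a'1 Ma']] := Hg i (ltnW ik).
    by exists a'; split => // l; rewrite mxE (negbTE ne).
  move=> i ki l; rewrite mxE; case: (i =P i0) => [->|ne]; first exact: Hvv.
  apply: Hv; move: ki ne; rewrite /i0 => ki ne.
  have : (val i != k) by apply/eqP=> e; apply: ne; apply: val_inj.
  by move=> H; rewrite ltn_neqAle ki andbT eq_sym; exact: H.
rewrite eM per_rowlin big_bool /=.
rewrite per_rowlin.
set B := 2 ^+ n./2.
have Pt : per (rowset M i0 (fun l => (l == i0)%:R)) <= B.
  by apply: (sub false i0) => l; rewrite /vrow mul0r subr0.
have Pj : forall j, per (rowset M i0 (fun l => (l == i0)%:R - (l == j)%:R)) <= B.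
  by move=> j; apply: (sub true j) => l; rewrite /vrow mul1r.
apply: le_trans (_ : (1 - \sum_j a j) * B + 1 * \sum_j a j * B <= _).
  apply: lerD.
    by apply: ler_wpM2l => //; rewrite subr_ge0.
  rewrite !mul1r; apply: ler_sum => j _.
  exact: ler_wpM2l.
by rewrite mul1r -mulr_suml -mulrDl subrK mul1r.
Qed.

Definition pp (i : nat) := if odd i then i.-1 else i.+1.

Lemma half_eqE j h : (j./2 == h) = (j == h.*2) || (j == (h.*2).+1).
Proof.
have := odd_double_half j; case: (odd j) => /=; move: (j./2) => x Hj; lia.
Qed.

Lemma cond_pp n i j : odd n -> (i < n.-1)%N ->
  [&& (i < n.-1)%N, (j < n.-1)%N, i./2 == j./2 & i != j] = (j == pp i).
Proof.
move=> on ilt; have Hn := odd_double_half n; rewrite on in Hn.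
have Hi := odd_double_half i.
rewrite eq_sym half_eqE /pp; case: (odd i) Hi => /= Hi;
move: (i./2) (n./2) Hi Hn => h m Hi Hn; lia.
Qed.

Lemma pp_even k : pp (k.*2) = (k.*2).+1.
Proof. by rewrite /pp odd_double. Qed.
Lemma pp_odd k : pp (k.*2).+1 = k.*2.
Proof. by rewrite /pp /= odd_double. Qed.

Lemma pp_lt n i : odd n -> (i < n.-1)%N -> (pp i < n.-1)%N.
Proof.
move=> on ilt; have Hn := odd_double_half n; rewrite on in Hn.
have Hi := odd_double_half i; rewrite /pp; case: (odd i) Hi => /= Hi;
move: (i./2) (n./2) Hi Hn => h m Hi Hn; lia.
Qed.

Lemma pp_neq i : pp i != i.
Proof. rewrite /pp; case: (odd i) (odd_double_half i) => /=; move: (i./2) => h; lia. Qed.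

Lemma sumG0 (T : finType) (f : T -> T) (R : numDomainType) : sumG f R set0 = 1.
Proof.
rewrite /sumG (big_pred1 set0); first by rewrite cards0 expr0.
move=> S; rewrite !inE subset0; case: (S =P set0) => [->|_]; by rewrite ?good0.
Qed.

Section Ext.
Variables (R : realFieldType) (n : nat) (s : R).
Hypotheses (n3 : (3 <= n)%N) (on : odd n) (slo : (n.-1)%:R < s) (shi : s <= n%:R).

Let E := extremal_mx n s.
Let c := s - (n.-1)%:R.

Lemma E_lo (i j : 'I_n) : (i < n.-1)%N -> E i j = ((j : nat) == pp i)%:R.
Proof.
move=> ilt; rewrite /E mxE cond_pp //; case: (_ == _) => //.
by rewrite ifF //; apply/negbTE; lia.
Qed.

Lemma E_hi (i j : 'I_n) : (i : nat) = n.-1 -> E i j = if (j : nat) == n.-2 then c else 0.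
Proof.
move=> ie; rewrite /E mxE ifF; last by lia.
by rewrite ie eqxx.
Qed.

Lemma c_ge0 : 0 <= c.
Proof. by rewrite /c subr_ge0 ltW. Qed.

Lemma c_le1 : c <= 1.
Proof.
have e : n%:R = (n.-1)%:R + 1 :> R by rewrite natr1 prednK //; lia.
by rewrite /c -(lerD2r (n.-1)%:R) subrK addrC -e.
Qed.

Lemma rowsum_lo (i : 'I_n) : (i < n.-1)%N -> \sum_j E i j = 1.
Proof.
move=> ilt; have pl : (pp i < n)%N by have := pp_lt on ilt; lia.
rewrite (bigD1 (Ordinal pl)) //= E_lo // eqxx big1 ?addr0 // => j ne.
rewrite E_lo //; case: eqP => // e; case/eqP: ne; exact: val_inj.
Qed.

Lemma rowsum_hi (i : 'I_n) : (i : nat) = n.-1 -> \sum_j E i j = c.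
Proof.
move=> ie; have pl : (n.-2 < n)%N by lia.
rewrite (bigD1 (Ordinal pl)) //= E_hi // eqxx big1 ?addr0 // => j ne.
rewrite E_hi //; case: eqP => // e; case/eqP: ne; exact: val_inj.
Qed.

Lemma ext_omega : in_omega_tilde s E.
Proof.
split; first split.
- move=> i j; case: (ltnP i n.-1) => il; first by rewrite E_lo // ler0n.
  rewrite E_hi; last by have := ltn_ord i; lia.
  by case: (_ == _) => //; exact: c_ge0.
- move=> i; case: (ltnP i n.-1) => il; first by rewrite rowsum_lo.
  by rewrite rowsum_hi ?c_le1 //; have := ltn_ord i; lia.
have ln : (n.-1 < n)%N by lia.
rewrite /sigma (bigD1 (Ordinal ln)) //= rowsum_hi //.
rewrite (eq_bigr (fun _ => 1)); last first.
  move=> i ne; apply: rowsum_lo; have := ltn_ord i.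
  have : (i : nat) != n.-1 by apply/eqP=> e; case/eqP: ne; exact: val_inj.
  lia.
rewrite sumr_const cardC1 card_ord /c.
by rewrite [X in _ + X](_ : _ = (n.-1)%:R) ?subrK // -mulr_natr mul1r.
Qed.

Let D := [set i : 'I_n | (i < n.-1)%N].
Let f := fun i : 'I_n => insubd i (pp i).

Lemma f_val (i : 'I_n) : (i < n.-1)%N -> val (f i) = pp i.
Proof.
move=> il; rewrite /f val_insubd ifT //; have := pp_lt on il; lia.
Qed.

Lemma per_ext_vmx : per (1%:M - E) = per (vmx R D f).
Proof.
have ln : (n.-1 < n)%N by lia.
set last := Ordinal ln.
rewrite /per; apply: eq_bigr => p _.
have lo (k : 'I_n) : k != last -> (k < n.-1)%N.
  move=> ne; have := ltn_ord k.
  have : (k : nat) != n.-1 by apply/eqP=> e; case/eqP: ne; exact: val_inj.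
  lia.
have subE (k l : 'I_n) : (1%:M - E) k l = (k == l)%:R - E k l.
  by rewrite !mxE.
have entry (k l : 'I_n) : k != last -> (1%:M - E) k l = vmx R D f k l.
  move=> ne; have kl := lo k ne.
  rewrite subE E_lo // mxE // inE kl mul1r eq_sym; congr (_ - _%:R).
  by rewrite -(inj_eq val_inj) f_val.
case: (p last =P last) => [pl|pl].
  apply: eq_bigr => k _; case: (k =P last) => [->|/eqP ne]; last exact: entry.
  rewrite pl subE E_hi // mxE eqxx inE ltnn mul0r subr0 ifF ?subr0 //.
  by rewrite /last /=; apply/negbTE; lia.
have k0ne : (p^-1)%g last != last.
  apply/eqP=> e; apply: pl; rewrite -{1}e; by rewrite permKV.
rewrite (bigD1 ((p^-1)%g last)) //= [RHS](bigD1 ((p^-1)%g last)) //= permKV.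
rewrite -entry // subE E_lo; last exact: lo.
rewrite (negbTE k0ne) (_ : (_ == pp _) = false) ?subrr ?mul0r //.
have := pp_lt on (lo _ k0ne); rewrite /last /=; lia.
Qed.

Lemma sumG_pairs k : (k.*2 <= n.-1)%N ->
  sumG f R [set i : 'I_n | (i < k.*2)%N] = 2 ^+ k.
Proof.
elim: k => [|k IH] kl.
  rewrite (_ : [set _ | _] = set0) ?sumG0 //.
have a0 : (k.*2 < n)%N by lia.
have a1 : ((k.*2).+1 < n)%N by lia.
set a := Ordinal a0; set b := Ordinal a1.
set A := [set a; b].
have inA (x : 'I_n) : (x \in A) = ((x : nat) == k.*2) || ((x : nat) == (k.*2).+1).
  by rewrite !inE -!(inj_eq val_inj).
have fa : f a = b by apply: val_inj; rewrite f_val /= ?pp_even //; lia.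
have fb : f b = a by apply: val_inj; rewrite f_val /= ?pp_odd //; lia.
have gA : good f A by rewrite /good /A imsetU1 imset_set1 fa fb setUC.
have AU : A \subset [set i : 'I_n | (i < (k.+1).*2)%N].
  by apply/subsetP=> x; rewrite inA inE; lia.
rewrite (@sumG_split _ f R _ A AU gA); last first.
- move=> S; rewrite inE => /andP [_ gS].
  case: (boolP (S :&: A == set0)) => //= /set0Pn [x]; rewrite inE => /andP [xS].
  rewrite !inE => /orP [] /eqP e; subst x; rewrite subUset !sub1set.
  + by rewrite xS -fa (good_mem gS xS).
  + by rewrite xS -fb (good_mem gS xS).
- by apply/set0Pn; exists a; rewrite !inE eqxx.
rewrite (_ : _ :\: A = [set i : 'I_n | (i < k.*2)%N]); last first.
  apply/setP=> x; rewrite !inE -!(inj_eq val_inj) /=; lia.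
rewrite IH; last lia.
rewrite cards2 (_ : a != b); last by rewrite -(inj_eq val_inj) /=; lia.
by rewrite expr2 mulrNN mul1r exprS.
Qed.

Lemma per_ext : per (1%:M - E) = 2 ^+ (n.-1)./2.
Proof.
rewrite per_ext_vmx per_vmx; last first.
  move=> i; rewrite inE => il; rewrite -(inj_eq val_inj) f_val //; exact: pp_neq.
have Hn := odd_double_half n; rewrite on in Hn.
have -> : (n.-1)./2 = n./2 by rewrite -{1}Hn /= doubleK.
rewrite -sumG_pairs; last by lia.
congr (sumG _ _ _); apply/setP=> i; rewrite !inE; lia.
Qed.

End Ext.

Lemma per_bound (R : numDomainType) n (A : 'M[R]_n) :
  row_substochastic A -> per (1%:M - A) <= 2 ^+ (n./2).
Proof.
move=> [A0 A1].
apply: (@reduce R n n (leqnn n) _ (fun _ => false) id).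
  by move=> i _; exists (A i); split => // l; rewrite !mxE eq_sym.
by move=> i; rewrite leqNgt ltn_ord.
Qed.

Theorem mainTheorem15 (R : realFieldType) (n : nat) (s : R) :
  (3 <= n)%N -> odd n -> (n.-1)%:R < s -> s <= n%:R ->
  (forall A : 'M[R]_n, in_omega_tilde s A -> per (1%:M - A) <= 2 ^+ (n.-1)./2)
  /\ in_omega_tilde s (extremal_mx n s)
  /\ per (1%:M - extremal_mx n s) = 2 ^+ (n.-1)./2.
Proof.
move=> n3 on slo shi.
have Hn := odd_double_half n; rewrite on in Hn.
have eh : (n.-1)./2 = n./2 by rewrite -{1}Hn /= doubleK.
split; first by move=> A [HA _]; rewrite eh; exact: per_bound.
by split; [apply: ext_omega | apply: per_ext].
Qed.
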